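(* Let $V\subset\mathbb{R}^3$ be covered by a conforming oriented tetrahedral mesh $\bigcup_e T_e$, let $p\ge2$, and on each element consider the edge, edge-face, face and cell functions listed below, assembled globally so that edge functions are shared by all elements containing that edge, face functions (including edge-face functions of that face) by the two elements sharing that face, and cell functions are local to each element. Then every finite linear combination of the assembled functions lies in $H(\operatorname{sym}\operatorname{Curl},V)$; equivalently, for every interior interface $\Xi$ between two elements with normal $\mathbf{n}$, the jump of $\operatorname{sym}(\mathbf{P}\operatorname{Anti}(\mathbf{n})^T)$ across $\Xi$ vanishes. The element functions on $T$ are: (i) for each edge $j$ and $\varphi\in\mathcal{E}^p_j(T)$: $\varphi\,\mathbf{d}_1\otimes\mathbf{t}$, $\varphi\,\mathbf{d}_2\otimes\mathbf{t}$; (ii) for each face $k$ with normal $\mathbf{n}$, each edge $j$ of face $k$ and $\varphi\in\mathcal{E}^p_j(T)$: $\varphi\,\mathbf{t}\otimes\mathbf{k}$, $\varphi\,\mathbf{m}\otimes\mathbf{k}$, $\varphi\,\mathbf{n}\otimes\mathbf{k}$, with $\mathbf{t}$ the tangent of edge $j$, $\mathbf{k}$ the edge-face vector of edge $j$ satisfying $\mathbf{n}\times\mathbf{k}\ne0$, $\mathbf{m}=\mathbf{Q}\mathbf{k}$, $\mathbf{Q}=\|\mathbf{n}\|^2\mathbb{1}-\mathbf{n}\otimes\mathbf{n}$; (iii) for each face $k$ and $\varphi\in\mathcal{F}^p_k(T)$, with $j=\min\mathcal{J}_k$ and $\mathbf{t},\mathbf{m}$ as in (ii) for edge $j$: $\varphi\,\mathbf{t}\otimes\mathbf{m}$,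 $\varphi\,\mathbf{m}\otimes\mathbf{t}$, $\varphi(\mathbf{t}\otimes\mathbf{t}-\mathbf{m}\otimes\mathbf{m})$, $\varphi\,\mathbf{n}\otimes\mathbf{t}$, $\varphi\,\mathbf{n}\otimes\mathbf{m}$; (iv) cell functions $\varphi\mathbb{1}$ with $\varphi\in\bigoplus_{j}\mathcal{E}^{p+1}_j(T)\oplus\bigoplus_k\mathcal{F}^{p+1}_k(T)\oplus\mathcal{C}^{p+1}(T)$, $\varphi\,\mathbf{t}\otimes\mathbf{n}$, $\varphi\,\mathbf{m}\otimes\mathbf{n}$, $\varphi\,\mathbf{n}\otimes\mathbf{n}$ with $\varphi\in\mathcal{F}^p_k(T)$ (vectors as in (iii)), and $\varphi\mathbf{T}$ with $\varphi\in\mathcal{C}^p(T)$, $\mathbf{T}\in\mathfrak{sl}(3)$.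
   Context: $H(\operatorname{sym}\operatorname{Curl},V)=\{\mathbf{P}\in[L^2(V)]^{3\times3}:\operatorname{sym}\operatorname{Curl}\mathbf{P}\in[L^2(V)]^{3\times3}\}$, where $\operatorname{Curl}\mathbf{P}=-\mathbf{P}\times\nabla$ is the row-wise curl and $\operatorname{sym}\mathbf{A}=\frac12(\mathbf{A}+\mathbf{A}^T)$; $\operatorname{Anti}(\mathbf{v})$ is the skew matrix with $\operatorname{Anti}(\mathbf{v})\mathbf{w}=\mathbf{v}\times\mathbf{w}$; $\mathfrak{sl}(3)$ is the space of trace-free $3\times3$ matrices, $\mathbb{1}$ the identity. Each element $T=\mathbf{x}(\Omega)$ is the non-degenerate image of the reference tetrahedron $\Omega=\{(\xi,\eta,\zeta)\in[0,1]^3:\xi+\eta+\zeta\le1\}$, $\mathbf{J}=\mathrm{D}\mathbf{x}$, with barycentric coordinates $\lambda_1=1-\xi-\eta-\zeta,\lambda_2=\zeta,\lambda_3=\eta,\lambda_4=\xi$. The mesh is oriented: the local vertex numbering of each element is increasing with respect to a fixed global vertex numbering. Edges $\mathcal{J}=\{(1,2),(1,3),(1,4),(2,3),(2,4),(3,4)\}$, faces $\mathcal{K}=\{(1,2,3),(1,2,4),(1,3,4),(2,3,4)\}$, $\mathcal{J}_k$ the edges of face $k$, $\min\mathcal{J}_k$ the lexicographically smallest. Scalar spaces: an $H^1$-conforming hierarchical polytopal basis of $\mathit{P}^q(T)$ consisting of vertex functions $\lambda_i$, edge spaces $\mathcal{E}^q_j(T)$ (dimension $q-1$, vanishing on other edges),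 face spaces $\mathcal{F}^q_k(T)$ (dimension $(q-2)(q-1)/2$, vanishing on other faces), cell space $\mathcal{C}^q(T)$ (dimension $(q-3)(q-2)(q-1)/6$, vanishing on $\partial T$), such that shared edge and face functions coincide on interfaces between neighbouring elements. Vectors: tangents $\mathbf{t}=\mathbf{J}\boldsymbol{\tau}$ with $\boldsymbol{\tau}_{12}=\mathbf{e}_3,\boldsymbol{\tau}_{13}=\mathbf{e}_2,\boldsymbol{\tau}_{14}=\mathbf{e}_1,\boldsymbol{\tau}_{23}=\mathbf{e}_2-\mathbf{e}_3,\boldsymbol{\tau}_{24}=\mathbf{e}_1-\mathbf{e}_3,\boldsymbol{\tau}_{34}=\mathbf{e}_1-\mathbf{e}_2$; edge-face vectors $\mathbf{k}=\mathbf{J}^{-T}\boldsymbol{\kappa}$ with reference pairs $(1,2):\{-\mathbf{e}_2,-\mathbf{e}_1\}$, $(1,3):\{\mathbf{e}_3,-\mathbf{e}_1\}$, $(1,4):\{\mathbf{e}_3,\mathbf{e}_2\}$, $(2,3):\{\mathbf{e}_1+\mathbf{e}_2+\mathbf{e}_3,-\mathbf{e}_1\}$, $(2,4):\{\mathbf{e}_1+\mathbf{e}_2+\mathbf{e}_3,\mathbf{e}_2\}$, $(3,4):\{\mathbf{e}_1+\mathbf{e}_2+\mathbf{e}_3,-\mathbf{e}_3\}$; face normals $\mathbf{n}=(\det\mathbf{J})\mathbf{J}^{-T}\boldsymbol{\nu}$ with $\boldsymbol{\nu}_{123}=-\mathbf{e}_1,\boldsymbol{\nu}_{124}=\mathbf{e}_2,\boldsymbol{\nu}_{134}=-\mathbf{e}_3,\boldsymbol{\nu}_{234}=-\mathbf{e}_1-\mathbf{e}_2-\mathbf{e}_3$;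 for an edge with tangent $\mathbf{t}=(t_1,t_2,t_3)$, $\mathbf{d}_2=(\operatorname{sgn}_*(t_1)|t_3|,\operatorname{sgn}_*(t_2)|t_3|,-\operatorname{sgn}_*(t_3)(|t_1|+|t_2|))^T$ with $\operatorname{sgn}_*(x)=1$ if $x\ge0$, $-1$ otherwise, and $\mathbf{d}_1=\mathbf{d}_2\times\mathbf{t}$. *)

(* Defs.v *)
From HB Require Import structures.
From mathcomp Require Import all_boot all_order all_algebra.
Set Implicit Arguments. Unset Strict Implicit. Unset Printing Implicit Defensive.
Import Order.TTheory GRing.Theory Num.Theory.
Local Open Scope ring_scope.

Section Linalg.
Variable R : realFieldType.
Local Notation vec := 'cV[R]_3.

(* i-th component (0-based) of a vector of R^3 *)
Definition cmp (v : vec) (i : nat) : R := v (inord i) ord0.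
Definition mkv (a b c : R) : vec :=
  \col_(i < 3) (if val i == 0%N then a else if val i == 1%N then b else c).
Definition ref_e1 : vec := mkv 1 0 0.
Definition ref_e2 : vec := mkv 0 1 0.
Definition ref_e3 : vec := mkv 0 0 1.
Definition ref_e123 : vec := ref_e1 + ref_e2 + ref_e3.

Definition cross (u v : vec) : vec :=
  mkv (cmp u 1 * cmp v 2 - cmp u 2 * cmp v 1)
      (cmp u 2 * cmp v 0 - cmp u 0 * cmp v 2)
      (cmp u 0 * cmp v 1 - cmp u 1 * cmp v 0).
(* Anti v is the matrix with Anti v w = v x w : its j-th column is v x e_j *)
Definition Anti (v : vec) : 'M[R]_3 :=
  \matrix_(i < 3, j < 3) (cross v (delta_mx j ord0)) i ord0.
Definition symm (A : 'M[R]_3) : 'M[R]_3 := 2^-1 *: (A + A^T).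
Definition tens (a b : vec) : 'M[R]_3 := a *m b^T.
Definition sgnS (x : R) : R := if 0 <= x then 1 else -1.
Definition dvec2 (t : vec) : vec :=
  mkv (sgnS (cmp t 0) * `|cmp t 2|) (sgnS (cmp t 1) * `|cmp t 2|)
      (- (sgnS (cmp t 2) * (`|cmp t 0| + `|cmp t 1|))).
Definition dvec1 (t : vec) : vec := cross (dvec2 t) t.
Definition sqnorm (n : vec) : R := (n^T *m n) ord0 ord0.
Definition Qm (n : vec) : 'M[R]_3 := sqnorm n *: 1%:M - tens n n.

Definition Jlist : seq (nat * nat) := [:: (1,2); (1,3); (1,4); (2,3); (2,4); (3,4)]%N.
Definition Klist : seq (nat * nat * nat) := [:: (1,2,3); (1,2,4); (1,3,4); (2,3,4)]%N.
(* local vertices are 'I_4, local vertex a (1-based) is inord a.-1 *)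
Definition edge_verts (j : 'I_6) : 'I_4 * 'I_4 :=
  let: (a, b) := nth (1,2)%N Jlist j in (inord a.-1, inord b.-1).
Definition face_verts (k : 'I_4) : 'I_4 * 'I_4 * 'I_4 :=
  let: (a, b, c) := nth (1,2,3)%N Klist k in (inord a.-1, inord b.-1, inord c.-1).
Definition face_edge (k : 'I_4) (r : 'I_3) : 'I_6 :=
  let: (a, b, c) := nth (1,2,3)%N Klist k in
  inord (index (nth (a, b) [:: (a, b); (a, c); (b, c)] r) Jlist).
(* min J_k : the lexicographically smallest edge of face (a,b,c), a<b<c, is (a,b) *)
Definition min_face_edge (k : 'I_4) : 'I_6 := face_edge k (inord 0).
Definition tau (j : 'I_6) : vec :=
  nth 0 [:: ref_e3; ref_e2; ref_e1; ref_e2 - ref_e3; ref_e1 - ref_e3; ref_e1 - ref_e2] j.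
Definition kap1 (j : 'I_6) : vec :=
  nth 0 [:: - ref_e2; ref_e3; ref_e3; ref_e123; ref_e123; ref_e123] j.
Definition kap2 (j : 'I_6) : vec :=
  nth 0 [:: - ref_e1; - ref_e1; ref_e2; - ref_e1; ref_e2; - ref_e3] j.
Definition nu (k : 'I_4) : vec :=
  nth 0 [:: - ref_e1; ref_e2; - ref_e3; - ref_e123] k.
Definition refOmega (xi : vec) : Prop :=
  [/\ 0 <= cmp xi 0, 0 <= cmp xi 1, 0 <= cmp xi 2 & cmp xi 0 + cmp xi 1 + cmp xi 2 <= 1].

Definition dimE (q : nat) : nat := q.-1.
Definition dimF (q : nat) : nat := ((q - 2) * (q - 1)) %/ 2.
Definition dimC (q : nat) : nat := ((q - 3) * (q - 2) * (q - 1)) %/ 6.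

Definition isPoly (q : nat) (f : vec -> R) : Prop :=
  exists c : nat -> nat -> nat -> R, forall x,
    f x = \sum_(a < q.+1) \sum_(b < q.+1) \sum_(d < q.+1)
            (if (a + b + d <= q)%N
             then c a b d * cmp x 0 ^+ a * cmp x 1 ^+ b * cmp x 2 ^+ d else 0).

(* ---- the mesh: N global vertices with coordinates X, M elements with
   global vertex numbers gv e (local vertex -> global vertex) ---- *)
Variables (N M : nat) (X : 'I_N -> vec) (gv : 'I_M -> 'I_4 -> 'I_N).

Definition vtx (e : 'I_M) (a : nat) : vec := X (gv e (inord a.-1)).  (* 1-based *)
Definition xmap (e : 'I_M) (xi : vec) : vec :=
  (1 - cmp xi 0 - cmp xi 1 - cmp xi 2) *: vtx e 1 + cmp xi 2 *: vtx e 2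
  + cmp xi 1 *: vtx e 3 + cmp xi 0 *: vtx e 4.
Definition tet (e : 'I_M) (x : vec) : Prop := exists2 xi, refOmega xi & x = xmap e xi.
(* J = Dx : columns d x/d xi, d x/d eta, d x/d zeta *)
Definition Jm (e : 'I_M) : 'M[R]_3 :=
  \matrix_(i < 3, j < 3)
    (if val j == 0%N then vtx e 4 - vtx e 1
     else if val j == 1%N then vtx e 3 - vtx e 1 else vtx e 2 - vtx e 1) i ord0.
Definition JiT (e : 'I_M) : 'M[R]_3 := (invmx (Jm e))^T.
Definition tvec (e : 'I_M) (j : 'I_6) : vec := Jm e *m tau j.
Definition nvec (e : 'I_M) (k : 'I_4) : vec := \det (Jm e) *: (JiT e *m nu k).
Definition kvec (e : 'I_M) (k : 'I_4) (j : 'I_6) : vec :=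
  let k1 := JiT e *m kap1 j in let k2 := JiT e *m kap2 j in
  if cross (nvec e k) k1 != 0 then k1 else k2.
Definition mvec (e : 'I_M) (k : 'I_4) (j : 'I_6) : vec := Qm (nvec e k) *m kvec e k j.
(* barycentric coordinates lambda_1..lambda_4 of a physical point *)
Definition lam (e : 'I_M) (a : 'I_4) (x : vec) : R :=
  let xi := invmx (Jm e) *m (x - vtx e 1) in
  if val a == 0%N then 1 - cmp xi 0 - cmp xi 1 - cmp xi 2
  else if val a == 1%N then cmp xi 2 else if val a == 2%N then cmp xi 1 else cmp xi 0.

Definition gedge (e : 'I_M) (j : 'I_6) : 'I_N * 'I_N :=
  let: (a, b) := edge_verts j in (gv e a, gv e b).
Definition gface (e : 'I_M) (k : 'I_4) : 'I_N * 'I_N * 'I_N :=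
  let: (a, b, c) := face_verts k in (gv e a, gv e b, gv e c).
Definition vset (e : 'I_M) : {set 'I_N} := [set gv e a | a : 'I_4].
(* convex hull of the global vertices in S (empty if S is empty) *)
Definition hullS (S : {set 'I_N}) (x : vec) : Prop :=
  exists w : 'I_N -> R, [/\ forall g, 0 <= w g, forall g, g \notin S -> w g = 0,
     \sum_g w g = 1 & x = \sum_g w g *: X g].
Definition edgeSet (e : 'I_M) (j : 'I_6) : vec -> Prop :=
  hullS [set gv e (edge_verts j).1; gv e (edge_verts j).2].
Definition faceSet (e : 'I_M) (k : 'I_4) : vec -> Prop :=
  hullS [set gv e (face_verts k).1.1; gv e (face_verts k).1.2; gv e (face_verts k).2].

(* conforming, oriented, non-degenerate tetrahedral mesh *)
Definition mesh_ok : Prop :=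
  [/\ forall e (a b : 'I_4), (a < b)%N -> (gv e a < gv e b)%N,
      forall e, \det (Jm e) != 0,
      forall e e', gv e =1 gv e' -> e = e'
    & forall e e' x, (tet e x /\ tet e' x) <-> hullS (vset e :&: vset e') x].

(* scalar edge / face / cell functions: degree q, element, local entity, index *)
Record scalarFam := ScalarFam {
  sE : nat -> 'I_M -> 'I_6 -> nat -> vec -> R;
  sF : nat -> 'I_M -> 'I_4 -> nat -> vec -> R;
  sC : nat -> 'I_M -> nat -> vec -> R }.

Definition comb (S : scalarFam) (q : nat) (e : 'I_M) (cv : 'I_4 -> R)
  (ce : 'I_6 -> nat -> R) (cf : 'I_4 -> nat -> R) (cc : nat -> R) (x : vec) : R :=
  \sum_(a < 4) cv a * lam e a x
  + \sum_(j < 6) \sum_(i < dimE q) ce j i * sE S q e j i x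
  + \sum_(k < 4) \sum_(i < dimF q) cf k i * sF S q e k i x
  + \sum_(i < dimC q) cc i * sC S q e i x.

Definition basis_q (S : scalarFam) (q : nat) (e : 'I_M) : Prop :=
  [/\ (forall j (i : nat), (i < dimE q)%N -> isPoly q (sE S q e j i)),
      (forall k (i : nat), (i < dimF q)%N -> isPoly q (sF S q e k i)),
      (forall (i : nat), (i < dimC q)%N -> isPoly q (sC S q e i)),
      (forall cv ce cf cc, (forall x, tet e x -> comb S q e cv ce cf cc x = 0) ->
         [/\ forall a, cv a = 0,
             forall j (i : nat), (i < dimE q)%N -> ce j i = 0,
             forall k (i : nat), (i < dimF q)%N -> cf k i = 0
           & forall (i : nat), (i < dimC q)%N -> cc i = 0])
    & (forall f, isPoly q f -> exists cv ce cf cc,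
         forall x, tet e x -> f x = comb S q e cv ce cf cc x)].

Definition polytopal_q (S : scalarFam) (q : nat) (e : 'I_M) : Prop :=
  [/\ (forall j (i : nat), (i < dimE q)%N ->
         (forall j', j' != j -> forall x, edgeSet e j' x -> sE S q e j i x = 0) /\
         (forall k, (forall r, face_edge k r != j) ->
            forall x, faceSet e k x -> sE S q e j i x = 0)),
      (forall k (i : nat), (i < dimF q)%N ->
         forall k', k' != k -> forall x, faceSet e k' x -> sF S q e k i x = 0)
    & (forall (i : nat), (i < dimC q)%N ->
         forall k x, faceSet e k x -> sC S q e i x = 0)].

Definition shared_q (S : scalarFam) (q : nat) : Prop :=
  forall e e' k k', gface e k = gface e' k' -> forall x, faceSet e k x ->
    (forall r (i : nat), (i < dimE q)%N ->
        sE S q e (face_edge k r) i x = sE S q e' (face_edge k' r) i x) /\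
    (forall (i : nat), (i < dimF q)%N -> sF S q e k i x = sF S q e' k' i x).

Definition hierarchical (S : scalarFam) (p : nat) : Prop :=
  [/\ forall e j (i : nat), (i < dimE p)%N -> sE S p.+1 e j i = sE S p e j i,
      forall e k (i : nat), (i < dimF p)%N -> sF S p.+1 e k i = sF S p e k i
    & forall e (i : nat), (i < dimC p)%N -> sC S p.+1 e i = sC S p e i].

Definition scalar_ok (S : scalarFam) (p : nat) : Prop :=
  hierarchical S p /\
  forall q, (q == p) || (q == p.+1) ->
    (forall e, basis_q S q e /\ polytopal_q S q e) /\ shared_q S q.

(* coefficients of a finite linear combination of the assembled functions:
   edge and face functions are indexed by global edges / faces (shared),
   cell functions by elements (local). *)
Record coeffs := Coeffs {
  aE  : 'I_N * 'I_N -> nat -> nat -> R;                  (* (i): d1, d2 *)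
  aEF : 'I_N * 'I_N * 'I_N -> 'I_N * 'I_N -> nat -> nat -> R; (* (ii): t,m,n (x) k *)
  aF  : 'I_N * 'I_N * 'I_N -> nat -> nat -> R;           (* (iii): five kinds *)
  aCE : 'I_M -> 'I_6 -> nat -> R;                         (* (iv): phi 1, phi in E^{p+1}_j *)
  aCF : 'I_M -> 'I_4 -> nat -> R;                         (* (iv): phi 1, phi in F^{p+1}_k *)
  aCC : 'I_M -> nat -> R;                                 (* (iv): phi 1, phi in C^{p+1} *)
  aCn : 'I_M -> 'I_4 -> nat -> nat -> R;                  (* (iv): t,m,n (x) n *)
  aCT : 'I_M -> nat -> 'M[R]_3 }.                         (* (iv): phi T, T in sl(3) *)

Definition coeffs_ok (A : coeffs) (p : nat) : Prop :=
  forall e (i : nat), (i < dimC p)%N -> \tr (aCT A e i) = 0.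

Definition Pelem (S : scalarFam) (A : coeffs) (p : nat) (e : 'I_M) (x : vec) : 'M[R]_3 :=
  \sum_(j < 6) \sum_(i < dimE p)
     (let t := tvec e j in
      sE S p e j i x *: (aE A (gedge e j) i 0 *: tens (dvec1 t) t
                        + aE A (gedge e j) i 1 *: tens (dvec2 t) t))
  + \sum_(k < 4) \sum_(r < 3) \sum_(i < dimE p)
     (let j := face_edge k r in
      let t := tvec e j in let kk := kvec e k j in
      let m := mvec e k j in let n := nvec e k in
      sE S p e j i x *: (aEF A (gface e k) (gedge e j) i 0 *: tens t kk
                        + aEF A (gface e k) (gedge e j) i 1 *: tens m kk
                        + aEF A (gface e k) (gedge e j) i 2 *: tens n kk))
  + \sum_(k < 4) \sum_(i < dimF p)
     (let j := min_face_edge k in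
      let t := tvec e j in let m := mvec e k j in let n := nvec e k in
      sF S p e k i x *: (aF A (gface e k) i 0 *: tens t m
                        + aF A (gface e k) i 1 *: tens m t
                        + aF A (gface e k) i 2 *: (tens t t - tens m m)
                        + aF A (gface e k) i 3 *: tens n t
                        + aF A (gface e k) i 4 *: tens n m))
  + \sum_(j < 6) \sum_(i < dimE p.+1) (sE S p.+1 e j i x * aCE A e j i) *: 1%:M
  + \sum_(k < 4) \sum_(i < dimF p.+1) (sF S p.+1 e k i x * aCF A e k i) *: 1%:M
  + \sum_(i < dimC p.+1) (sC S p.+1 e i x * aCC A e i) *: 1%:M
  + \sum_(k < 4) \sum_(i < dimF p)
     (let j := min_face_edge k in
      let t := tvec e j in let m := mvec e k j in let n := nvec e k in
      sF S p e k i x *: (aCn A e k i 0 *: tens t n + aCn A e k i 1 *: tens m n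
                        + aCn A e k i 2 *: tens n n))
  + \sum_(i < dimC p) sC S p e i x *: aCT A e i.

End Linalg.

(* Main.v *)
Require Import Defs.
From HB Require Import structures.
From mathcomp Require Import all_boot all_order all_algebra.
From mathcomp Require Import ring lra.
Import GRing.Theory Num.Theory.
Local Open Scope ring_scope.
Set Implicit Arguments. Unset Strict Implicit.

Section Gsum.
Variable V : zmodType.
Lemma sum_inord n (F : 'I_n.+1 -> V) :
  \sum_(j < n.+1) F j = \sum_(0 <= j < n.+1) F (inord j).
Proof.
rewrite big_mkord; apply: eq_bigr => j _; by rewrite inord_val.
Qed.
Lemma gsum6 (F : 'I_6 -> V) : \sum_(j < 6) F j =
  F (inord 0) + F (inord 1) + F (inord 2) + F (inord 3) + F (inord 4) + F (inord 5).
Proof. by rewrite sum_inord !big_nat_recr // big_geq //= add0r. Qed.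
Lemma gsum3 (F : 'I_3 -> V) : \sum_(j < 3) F j = F (inord 0) + F (inord 1) + F (inord 2).
Proof. by rewrite sum_inord !big_nat_recr // big_geq //= add0r. Qed.
Lemma gsum4 (F : 'I_4 -> V) : \sum_(j < 4) F j = F (inord 0) + F (inord 1) + F (inord 2) + F (inord 3).
Proof. by rewrite sum_inord !big_nat_recr // big_geq //= add0r. Qed.
End Gsum.

Section Lin.
Variable R : realFieldType.
Local Notation vec := 'cV[R]_3.
Local Notation cmp := (@cmp R).
Local Notation mkv := (@mkv R).

Definition ent (A : 'M[R]_3) (i j : nat) : R := A (inord i) (inord j).
Definition dot (u v : vec) : R := (u^T *m v) 0 0.

Lemma cmp_mkv0 a b c : cmp (mkv a b c) 0 = a.
Proof. by rewrite /cmp /mkv mxE /= inordK. Qed.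
Lemma cmp_mkv1 a b c : cmp (mkv a b c) 1 = b.
Proof. by rewrite /cmp /mkv mxE /= inordK. Qed.
Lemma cmp_mkv2 a b c : cmp (mkv a b c) 2 = c.
Proof. by rewrite /cmp /mkv mxE /= inordK. Qed.

Lemma ord3_cases (i : 'I_3) : i = inord 0 \/ i = inord 1 \/ i = inord 2.
Proof.
case: i => [[|[|[|?]]] Hi] //.
- by left; apply/val_inj; rewrite /= inordK.
- by right; left; apply/val_inj; rewrite /= inordK.
- by right; right; apply/val_inj; rewrite /= inordK.
Qed.

Lemma eq_vec (u v : vec) : cmp u 0 = cmp v 0 -> cmp u 1 = cmp v 1 -> cmp u 2 = cmp v 2 -> u = v.
Proof.
move=> h0 h1 h2; apply/matrixP=> i j; rewrite (ord1 j).
by case: (ord3_cases i) => [->|[->|->]].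
Qed.

Lemma vecE (v : vec) : v = mkv (cmp v 0) (cmp v 1) (cmp v 2).
Proof. by apply: eq_vec; rewrite ?cmp_mkv0 ?cmp_mkv1 ?cmp_mkv2. Qed.

Lemma cmpD u v i : cmp (u + v) i = cmp u i + cmp v i. Proof. by rewrite /cmp mxE. Qed.
Lemma cmpN u i : cmp (- u) i = - cmp u i. Proof. by rewrite /cmp mxE. Qed.
Lemma cmpB u v i : cmp (u - v) i = cmp u i - cmp v i. Proof. by rewrite cmpD cmpN. Qed.
Lemma cmpZ a u i : cmp (a *: u) i = a * cmp u i. Proof. by rewrite /cmp mxE. Qed.
Lemma cmp0 i : cmp 0 i = 0. Proof. by rewrite /cmp mxE. Qed.

Lemma sum3 (F : 'I_3 -> R) : \sum_(j < 3) F j = F (inord 0) + F (inord 1) + F (inord 2).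
Proof.
rewrite !big_ord_recr big_ord0 /= add0r; congr (F _ + F _ + F _); apply/val_inj; by rewrite /= inordK.
Qed.

Lemma cmp_mul (A : 'M[R]_3) v i : cmp (A *m v) i =
  ent A i 0 * cmp v 0 + ent A i 1 * cmp v 1 + ent A i 2 * cmp v 2.
Proof. by rewrite /cmp mxE sum3. Qed.

Lemma ent_tr (A : 'M[R]_3) i j : ent A^T i j = ent A j i.
Proof. by rewrite /ent mxE. Qed.

Lemma dotE u v : dot u v = cmp u 0 * cmp v 0 + cmp u 1 * cmp v 1 + cmp u 2 * cmp v 2.
Proof. by rewrite /dot mxE sum3 !mxE. Qed.

Lemma eq_mat (A B : 'M[R]_3) :
  (forall i j, (i < 3)%N -> (j < 3)%N -> ent A i j = ent B i j) -> A = B.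
Proof.
move=> h; apply/matrixP=> i j.
have := h i j (ltn_ord i) (ltn_ord j); by rewrite /ent !inord_val.
Qed.

Lemma mx3E (A : 'M[R]_3) : A = \matrix_(i < 3, j < 3) ent A i j.
Proof. by apply/matrixP=> i j; rewrite mxE /ent !inord_val. Qed.

Lemma det3f (f : nat -> nat -> R) : \det (\matrix_(i < 3, j < 3) f i j) =
  f 0 0 * (f 1 1 * f 2 2 - f 1 2 * f 2 1)
  - f 0 1 * (f 1 0 * f 2 2 - f 1 2 * f 2 0)
  + f 0 2 * (f 1 0 * f 2 1 - f 1 1 * f 2 0).
Proof.
rewrite (expand_det_row _ 0) !big_ord_recr big_ord0 /= add0r.
rewrite /cofactor !(expand_det_row _ 0) !big_ord_recr !big_ord0 /= !add0r.
rewrite /cofactor !det_mx11 !mxE /=.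
rewrite !expr0 !expr1 /=. ring.
Qed.

Lemma det3 (A : 'M[R]_3) : \det A =
  ent A 0 0 * (ent A 1 1 * ent A 2 2 - ent A 1 2 * ent A 2 1)
  - ent A 0 1 * (ent A 1 0 * ent A 2 2 - ent A 1 2 * ent A 2 0)
  + ent A 0 2 * (ent A 1 0 * ent A 2 1 - ent A 1 1 * ent A 2 0).
Proof. by rewrite {1}(mx3E A) det3f. Qed.



Lemma cross_cmp0 u v : cmp (cross u v) 0 = cmp u 1 * cmp v 2 - cmp u 2 * cmp v 1.
Proof. by rewrite /cross cmp_mkv0. Qed.
Lemma cross_cmp1 u v : cmp (cross u v) 1 = cmp u 2 * cmp v 0 - cmp u 0 * cmp v 2.
Proof. by rewrite /cross cmp_mkv1. Qed.
Lemma cross_cmp2 u v : cmp (cross u v) 2 = cmp u 0 * cmp v 1 - cmp u 1 * cmp v 0.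
Proof. by rewrite /cross cmp_mkv2. Qed.
Definition crossE := (cross_cmp0, cross_cmp1, cross_cmp2).

Lemma cofactor_cross (J : 'M[R]_3) a b :
  J^T *m cross (J *m a) (J *m b) = \det J *: cross a b.
Proof.
apply: eq_vec; rewrite !(cmp_mul, cmpZ, crossE, ent_tr, det3); ring.
Qed.

Lemma lagrange u w d : cross (cross u w) d = dot u d *: w - dot w d *: u.
Proof. apply: eq_vec; rewrite !(cmpB, cmpZ, crossE, dotE); ring. Qed.

Lemma dot_cross_l u w : dot (cross u w) u = 0.
Proof. rewrite !(dotE, crossE); ring. Qed.
Lemma dot_cross_r u w : dot (cross u w) w = 0.
Proof. rewrite !(dotE, crossE); ring. Qed.
Lemma dotC u v : dot u v = dot v u.
Proof. rewrite !dotE; ring. Qed.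

Lemma sqnormE (n : vec) : sqnorm n = dot n n.
Proof. by []. Qed.

Lemma sqnorm_eq0 (n : vec) : sqnorm n = 0 -> n = 0.
Proof.
rewrite sqnormE dotE => h.
have h0 : cmp n 0 = 0 by nra.
have h1 : cmp n 1 = 0 by nra.
have h2 : cmp n 2 = 0 by nra.
apply: eq_vec; by rewrite cmp0.
Qed.


Lemma inord_eq3 a b : (a < 3)%N -> (b < 3)%N -> ((inord a : 'I_3) == inord b) = (a == b).
Proof. by move=> ha hb; rewrite -val_eqE /= !inordK. Qed.

Lemma cmp_delta l j : (l < 3)%N -> (j < 3)%N ->
  cmp (delta_mx (inord j) ord0) l = (l == j)%:R.
Proof. by move=> hl hj; rewrite /cmp mxE eqxx andbT inord_eq3. Qed.

Lemma ent_Anti (n : vec) i j : (j < 3)%N -> ent (Anti n) i j = cmp (cross n (delta_mx (inord j) ord0)) i.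
Proof. by move=> hj; rewrite /ent /Anti mxE. Qed.

Lemma Anti_mul (n v : vec) : Anti n *m v = cross n v.
Proof.
apply: eq_vec; rewrite !(cmp_mul, ent_Anti, crossE) // !cmp_delta //=; ring.
Qed.

Lemma ent_add (A B : 'M[R]_3) i j : ent (A + B) i j = ent A i j + ent B i j.
Proof. by rewrite /ent mxE. Qed.
Lemma ent0 i j : ent 0 i j = 0.
Proof. by rewrite /ent mxE. Qed.

Lemma Anti_skew (n : vec) : (Anti n)^T + Anti n = 0.
Proof.
apply: eq_mat => i j hi hj; rewrite ent_add ent_tr ent0 !ent_Anti //.
case: i hi => [|[|[|?]]] // _; case: j hj => [|[|[|?]]] // _;
  rewrite !crossE !cmp_delta //=; ring.
Qed.

Definition Lset (n : vec) (P : 'M[R]_3) : 'M[R]_3 := symm (P *m (Anti n)^T).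

Lemma LsetD n P Q : Lset n (P + Q) = Lset n P + Lset n Q.
Proof.
rewrite /Lset /symm mulmxDl [(_ + _)^T]raddfD /= -scalerDr.
by rewrite addrACA.
Qed.
Lemma Lset0 n : Lset n 0 = 0.
Proof. by rewrite /Lset /symm mul0mx trmx0 addr0 scaler0. Qed.
Lemma LsetZ n a P : Lset n (a *: P) = a *: Lset n P.
Proof. by rewrite /Lset /symm -scalemxAl [(_ *: _)^T]linearZ /= -scalerDr !scalerA mulrC. Qed.
Lemma Lset_sum n I (r : seq I) (Pr : pred I) (F : I -> 'M[R]_3) :
  Lset n (\sum_(i <- r | Pr i) F i) = \sum_(i <- r | Pr i) Lset n (F i).
Proof. exact: (big_morph _ (LsetD n) (Lset0 n)). Qed.
Lemma Lset_tens (n a b : vec) : Lset n (tens a b) = symm (tens a (cross n b)).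
Proof. by rewrite /Lset /tens -mulmxA -trmx_mul Anti_mul. Qed.
Lemma Lset_scal n c : Lset n (c *: 1%:M) = 0.
Proof.
rewrite /Lset /symm -scalemxAl mul1mx [(_ *: _)^T]linearZ /= trmxK -scalerDr Anti_skew.
by rewrite !scaler0.
Qed.
Lemma cross_self (n : vec) : cross n n = 0.
Proof. apply: eq_vec; rewrite !crossE cmp0; ring. Qed.
Lemma Lset_tens_n (n a : vec) : Lset n (tens a n) = 0.
Proof.
rewrite Lset_tens cross_self /tens trmx0 mulmx0 /symm trmx0 addr0 scaler0 //.
Qed.


Lemma mul_col_11 (u : vec) (s : 'M[R]_1) : u *m s = s 0 0 *: u.
Proof. by rewrite {1}(mx11_scalar s) mul_mx_scalar. Qed.

Lemma Qm_mul (n d : vec) : Qm n *m d = - cross n (cross n d).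
Proof.
rewrite /Qm mulmxBl -scalemxAl mul1mx /tens -mulmxA mul_col_11 -/(dot n d).
apply: eq_vec; rewrite !(cmpB, cmpN, cmpZ, crossE, dotE) sqnormE dotE; ring.
Qed.

Definition fe_nat (k r : nat) : nat :=
  nth 0%N (nth [::] [:: [:: 0; 1; 3]; [:: 0; 2; 4]; [:: 1; 2; 5]; [:: 3; 4; 5]]%N k) r.

Lemma face_edgeE (k : 'I_4) (r : 'I_3) : face_edge k r = inord (fe_nat k r).
Proof.
case: k => [[|[|[|[|k]]]] Hk]; try by exfalso.
all: case: r => [[|[|[|r]]] Hr]; try by exfalso.
all: rewrite /face_edge /=.
all: reflexivity.
Qed.


Lemma id1 (n k u : vec) :
  sqnorm n * dot k u = dot n k * dot n u - dot (cross n (cross n k)) u.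
Proof. rewrite sqnormE !(dotE, crossE); ring. Qed.

Lemma cross_0r (n : vec) : cross n 0 = 0.
Proof. apply: eq_vec; rewrite !(crossE, cmp0); ring. Qed.

Lemma dot_0l (u : vec) : dot 0 u = 0.
Proof. rewrite dotE !cmp0; ring. Qed.

Lemma cross_zero_dots (u w k : vec) : cross (cross u w) k = 0 -> sqnorm (cross u w) != 0 ->
  dot k u = 0 /\ dot k w = 0.
Proof.
move=> h hn; split.
- have := id1 (cross u w) k u; rewrite h cross_0r dot_0l dotC dot_cross_l.
  rewrite mulr0 subr0 => /eqP; rewrite mulf_eq0 (negbTE hn) /= => /eqP //.
- have := id1 (cross u w) k w; rewrite h cross_0r dot_0l dotC dot_cross_r.
  rewrite mulr0 subr0 => /eqP; rewrite mulf_eq0 (negbTE hn) /= => /eqP //.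
Qed.

End Lin.

Ltac vsimp := rewrite /ref_e123 /ref_e1 /ref_e2 /ref_e3 ?(dotE, crossE, cmpD, cmpN, cmpB, cmp0, cmpZ, cmp_mkv0, cmp_mkv1, cmp_mkv2).

Section Conc.
Variable R : realFieldType.
Local Notation vec := 'cV[R]_3.

Lemma fe_nat_lt6 k r : (k < 4)%N -> (r < 3)%N -> (fe_nat k r < 6)%N.
Proof. by case: k => [|[|[|[|k]]]] //; case: r => [|[|[|r]]]. Qed.

Lemma val_fe (k : 'I_4) (r : 'I_3) : nat_of_ord (face_edge k r) = fe_nat k r.
Proof. by rewrite face_edgeE inordK // fe_nat_lt6. Qed.

Definition taun (m : nat) : vec :=
  nth 0 [:: ref_e3 R; ref_e2 R; ref_e1 R; ref_e2 R - ref_e3 R; ref_e1 R - ref_e3 R; ref_e1 R - ref_e2 R] m.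
Definition kap1n (m : nat) : vec :=
  nth 0 [:: - ref_e2 R; ref_e3 R; ref_e3 R; ref_e123 R; ref_e123 R; ref_e123 R] m.
Definition kap2n (m : nat) : vec :=
  nth 0 [:: - ref_e1 R; - ref_e1 R; ref_e2 R; - ref_e1 R; ref_e2 R; - ref_e3 R] m.
Definition nun (m : nat) : vec := nth 0 [:: - ref_e1 R; ref_e2 R; - ref_e3 R; - ref_e123 R] m.
Definition par (k r : nat) : bool := (((k == 1) && (r == 0)) || ((k == 2) && (r < 2)) || (k == 3))%N.
Definition kseln (k r : nat) : vec := if par k r then kap2n (fe_nat k r) else kap1n (fe_nat k r).
Definition beta0 (r : nat) : R := if r == 0%N then 0 else 1.
Definition beta1 (r : nat) : R := if r == 0%N then -1 else if r == 1%N then 0 else 1.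


Lemma nun_cross k : (k < 4)%N -> nun k = cross (taun (fe_nat k 0)) (taun (fe_nat k 1)).
Proof.
case: k => [|[|[|[|k]]]] // _; apply: eq_vec; rewrite /nun /taun /=; vsimp; ring.
Qed.

Lemma nun_neq0 k : (k < 4)%N -> nun k != 0.
Proof.
case: k => [|[|[|[|k]]]] // _; apply/eqP => h.
- have := congr1 (fun v => cmp v 0) h; rewrite /nun /=; vsimp; lra.
- have := congr1 (fun v => cmp v 1) h; rewrite /nun /=; vsimp; lra.
- have := congr1 (fun v => cmp v 2) h; rewrite /nun /=; vsimp; lra.
- have := congr1 (fun v => cmp v 0) h; rewrite /nun /=; vsimp; lra.
Qed.

Lemma par_dots k r : (k < 4)%N -> (r < 3)%N -> par k r ->
  dot (kap1n (fe_nat k r)) (taun (fe_nat k 0)) = 0 /\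
  dot (kap1n (fe_nat k r)) (taun (fe_nat k 1)) = 0.
Proof.
case: k => [|[|[|[|k]]]] // _; case: r => [|[|[|r]]] // _ //=;
  rewrite /kap1n /taun /=; vsimp; split; ring.
Qed.

Lemma npar_dots k r : (k < 4)%N -> (r < 3)%N -> ~~ par k r ->
  dot (kap1n (fe_nat k r)) (taun (fe_nat k 0)) != 0 \/
  dot (kap1n (fe_nat k r)) (taun (fe_nat k 1)) != 0.
Proof.
case: k => [|[|[|[|k]]]] // _; case: r => [|[|[|r]]] // _ //=;
  rewrite /kap1n /taun /=; vsimp.
all: first [left; apply/eqP; lra | right; apply/eqP; lra].
Qed.

Lemma ksel_dots k r : (k < 4)%N -> (r < 3)%N ->
  dot (kseln k r) (taun (fe_nat k 0)) = beta0 r /\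
  dot (kseln k r) (taun (fe_nat k 1)) = beta1 r.
Proof.
case: k => [|[|[|[|k]]]] // _; case: r => [|[|[|r]]] // _;
  rewrite /kseln /= /kap1n /kap2n /taun /beta0 /beta1 /=; vsimp; split; ring.
Qed.

Lemma other_dots k k2 r r2 : (k < 4)%N -> (k2 < 4)%N -> (r < 3)%N -> (r2 < 3)%N ->
  k2 != k -> fe_nat k2 r2 = fe_nat k r ->
  dot (kseln k2 r2) (taun (fe_nat k 0)) = 0 /\
  dot (kseln k2 r2) (taun (fe_nat k 1)) = 0.
Proof.
case: k => [|[|[|[|k]]]] // _; case: k2 => [|[|[|[|k2]]]] // _;
case: r => [|[|[|r]]] // _; case: r2 => [|[|[|r2]]] // _ //= _ _;
  rewrite /kseln /= /kap1n /kap2n /taun /=; vsimp; split; ring.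
Qed.

End Conc.

Section Geo.
Variable R : realFieldType.
Local Notation vec := 'cV[R]_3.
Variables (N M : nat) (X : 'I_N -> vec) (gv : 'I_M -> 'I_4 -> 'I_N).
Local Notation Jm := (Jm X gv).
Local Notation JiT := (JiT X gv).
Local Notation vtx := (vtx X gv).
Local Notation tvec := (tvec X gv).
Local Notation nvec := (nvec X gv).
Local Notation kvec := (kvec X gv).
Local Notation mvec := (mvec X gv).

Lemma ent_Jm0 e i : ent (Jm e) i 0 = cmp (vtx e 4 - vtx e 1) i.
Proof. by rewrite /ent /Jm mxE /= inordK. Qed.
Lemma ent_Jm1 e i : ent (Jm e) i 1 = cmp (vtx e 3 - vtx e 1) i.
Proof. by rewrite /ent /Jm mxE /= inordK. Qed.
Lemma ent_Jm2 e i : ent (Jm e) i 2 = cmp (vtx e 2 - vtx e 1) i.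
Proof. by rewrite /ent /Jm mxE /= inordK. Qed.

Lemma Jm_mul e (v : vec) : Jm e *m v =
  cmp v 0 *: (vtx e 4 - vtx e 1) + cmp v 1 *: (vtx e 3 - vtx e 1) + cmp v 2 *: (vtx e 2 - vtx e 1).
Proof.
apply: eq_vec; rewrite !(cmp_mul, ent_Jm0, ent_Jm1, ent_Jm2, cmpD, cmpZ); ring.
Qed.

Lemma tvec_g e j : tvec e j = X (gedge gv e j).2 - X (gedge gv e j).1.
Proof.
rewrite /tvec Jm_mul /gedge /edge_verts /vtx.
case: j => [[|[|[|[|[|[|j]]]]]] Hj] //=; rewrite /tau /=; apply: eq_vec; vsimp; ring.
Qed.

End Geo.

Section Geo2.
Variable R : realFieldType.
Local Notation vec := 'cV[R]_3.
Variables (N M : nat) (X : 'I_N -> vec) (gv : 'I_M -> 'I_4 -> 'I_N).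
Local Notation Jm := (Jm X gv).
Local Notation JiT := (JiT X gv).
Local Notation vtx := (vtx X gv).
Local Notation tvec := (tvec X gv).
Local Notation nvec := (nvec X gv).
Local Notation kvec := (kvec X gv).
Local Notation mvec := (mvec X gv).

Variable e : 'I_M.
Hypothesis hdet : \det (Jm e) != 0.

Lemma Jm_unit : Jm e \in unitmx.
Proof. by rewrite unitmxE unitfE. Qed.

Lemma JT_JiT : (Jm e)^T *m JiT e = 1%:M.
Proof. by rewrite /JiT -trmx_mul mulVmx ?Jm_unit // trmx1. Qed.
Lemma JiT_JT : JiT e *m (Jm e)^T = 1%:M.
Proof. by rewrite /JiT -trmx_mul mulmxV ?Jm_unit // trmx1. Qed.

Lemma dot_JiT (v t : vec) : dot (JiT e *m v) (Jm e *m t) = dot v t.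
Proof.
rewrite /dot /JiT trmx_mul trmxK mulmxA -[_ *m invmx _ *m _]mulmxA mulVmx ?Jm_unit //.
by rewrite mulmx1.
Qed.

Lemma JT_inj (a b : vec) : (Jm e)^T *m a = (Jm e)^T *m b -> a = b.
Proof.
move=> h; rewrite -[a]mul1mx -[b]mul1mx -JiT_JT -!mulmxA h //.
Qed.

Lemma tau_fe (k : 'I_4) r : tau R (face_edge k r) = taun R (fe_nat k r).
Proof. by rewrite /tau val_fe. Qed.

Lemma JT_nvec k : (Jm e)^T *m nvec e k = \det (Jm e) *: nu R k.
Proof. by rewrite /nvec -scalemxAr mulmxA JT_JiT mul1mx. Qed.

Lemma nvec_cross (k : 'I_4) :
  nvec e k = cross (tvec e (face_edge k (inord 0))) (tvec e (face_edge k (inord 1))).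
Proof.
apply: JT_inj; rewrite JT_nvec /tvec cofactor_cross; congr (_ *: _).
rewrite !tau_fe !inordK // -nun_cross //.
Qed.


Lemma nvec_sq_neq0 k : sqnorm (nvec e k) != 0.
Proof.
apply/eqP => /sqnorm_eq0 h; have := JT_nvec k; rewrite h mulmx0 => /esym/eqP.
rewrite scaler_eq0 (negbTE hdet) /=.
by rewrite (negbTE (@nun_neq0 R k (ltn_ord k))).
Qed.

Lemma dot_JiT_fe (k : 'I_4) (s : nat) (v : vec) : (s < 3)%N ->
  dot (JiT e *m v) (tvec e (face_edge k (inord s))) = dot v (taun R (fe_nat k s)).
Proof. by move=> hs; rewrite /tvec dot_JiT tau_fe inordK. Qed.

Lemma kvec_sel (k : 'I_4) (r : 'I_3) : kvec e k (face_edge k r) = JiT e *m kseln R k r.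
Proof.
rewrite /kvec /kseln /kap1 /kap2 val_fe -/(kap1n R _) -/(kap2n R _).
case hp: (par k r).
- have [h0 h1] := par_dots R (ltn_ord k) (ltn_ord r) hp.
  rewrite nvec_cross lagrange dotC (dot_JiT_fe _ _ (isT : (0 < 3)%N)) h0.
  rewrite dotC (dot_JiT_fe _ _ (isT : (1 < 3)%N)) h1 !scale0r subrr eqxx //.
- have hn : cross (nvec e k) (JiT e *m kap1n R (fe_nat k r)) != 0.
    apply/eqP => h.
    move: (h); rewrite nvec_cross => h'.
    have [d0 d1] := cross_zero_dots h' (eq_ind _ (fun z => sqnorm z != 0) (nvec_sq_neq0 k) _ (nvec_cross k)).
    rewrite (dot_JiT_fe _ _ (isT : (0 < 3)%N)) in d0.
    rewrite (dot_JiT_fe _ _ (isT : (1 < 3)%N)) in d1.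
    have := npar_dots R (ltn_ord k) (ltn_ord r) (negbT hp).
    by rewrite d0 d1 eqxx; case.
  by rewrite hn.
Qed.


Lemma kvec_cross (k : 'I_4) (r : 'I_3) :
  cross (nvec e k) (kvec e k (face_edge k r)) =
  beta0 R r *: tvec e (face_edge k (inord 1)) - beta1 R r *: tvec e (face_edge k (inord 0)).
Proof.
have [h0 h1] := ksel_dots R (ltn_ord k) (ltn_ord r).
rewrite kvec_sel nvec_cross lagrange dotC (dot_JiT_fe _ _ (isT : (0 < 3)%N)) h0.
by rewrite dotC (dot_JiT_fe _ _ (isT : (1 < 3)%N)) h1.
Qed.

Lemma mvec_E (k : 'I_4) (r : 'I_3) :
  mvec e k (face_edge k r) = - cross (nvec e k)
   (beta0 R r *: tvec e (face_edge k (inord 1)) - beta1 R r *: tvec e (face_edge k (inord 0))).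
Proof. by rewrite /mvec Qm_mul kvec_cross. Qed.

Lemma other_cross (k k2 : 'I_4) (r r2 : 'I_3) : k2 != k -> face_edge k2 r2 = face_edge k r ->
  cross (nvec e k) (kvec e k2 (face_edge k2 r2)) = 0.
Proof.
move=> hk hf.
have hf' : fe_nat k2 r2 = fe_nat k r by rewrite -!val_fe hf.
have [h0 h1] := other_dots R (ltn_ord k) (ltn_ord k2) (ltn_ord r) (ltn_ord r2) hk hf'.
rewrite kvec_sel nvec_cross lagrange dotC (dot_JiT_fe _ _ (isT : (0 < 3)%N)) h0.
rewrite dotC (dot_JiT_fe _ _ (isT : (1 < 3)%N)) h1 !scale0r subrr //.
Qed.

End Geo2.

Definition gedgeR N (G : 'I_N * 'I_N * 'I_N) (r : 'I_3) : 'I_N * 'I_N :=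
  let: (A, B, C) := G in nth (A, B) [:: (A, B); (A, C); (B, C)] r.

Lemma gedge_fe M N (gv : 'I_M -> 'I_4 -> 'I_N) e (k : 'I_4) (r : 'I_3) :
  gedge gv e (face_edge k r) = gedgeR (gface gv e k) r.
Proof.
rewrite face_edgeE /gedge /edge_verts /gface /face_verts inordK; last first.
  by rewrite fe_nat_lt6.
case: k => [[|[|[|[|k]]]] Hk]; try by exfalso.
all: case: r => [[|[|[|r]]] Hr]; try by exfalso.
all: reflexivity.
Qed.


Section PE.
Variable R : realFieldType.
Local Notation vec := 'cV[R]_3.
Variables (N M : nat) (X : 'I_N -> vec) (gv : 'I_M -> 'I_4 -> 'I_N).
Variables (S : scalarFam R M) (A : coeffs R N M) (p : nat) (x : vec).
Local Notation Jm := (Jm X gv).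
Local Notation tvec := (tvec X gv).
Local Notation nvec := (nvec X gv).
Local Notation kvec := (kvec X gv).
Local Notation mvec := (mvec X gv).
Local Notation gedge := (gedge gv).
Local Notation gface := (gface gv).

Definition F1 e (j : 'I_6) (i : 'I_(dimE p)) : 'M[R]_3 :=
     (let t := tvec e j in
      sE S p e j i x *: (aE A (gedge e j) i 0 *: tens (dvec1 t) t
                        + aE A (gedge e j) i 1 *: tens (dvec2 t) t)).
Definition F2 e (k : 'I_4) (r : 'I_3) (i : 'I_(dimE p)) : 'M[R]_3 :=
     (let j := face_edge k r in
      let t := tvec e j in let kk := kvec e k j in
      let m := mvec e k j in let n := nvec e k in
      sE S p e j i x *: (aEF A (gface e k) (gedge e j) i 0 *: tens t kk
                        + aEF A (gface e k) (gedge e j) i 1 *: tens m kk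
                        + aEF A (gface e k) (gedge e j) i 2 *: tens n kk)).
Definition F3 e (k : 'I_4) (i : 'I_(dimF p)) : 'M[R]_3 :=
     (let j := min_face_edge k in
      let t := tvec e j in let m := mvec e k j in let n := nvec e k in
      sF S p e k i x *: (aF A (gface e k) i 0 *: tens t m
                        + aF A (gface e k) i 1 *: tens m t
                        + aF A (gface e k) i 2 *: (tens t t - tens m m)
                        + aF A (gface e k) i 3 *: tens n t
                        + aF A (gface e k) i 4 *: tens n m)).
Definition F7 e (k : 'I_4) (i : 'I_(dimF p)) : 'M[R]_3 :=
     (let j := min_face_edge k in
      let t := tvec e j in let m := mvec e k j in let n := nvec e k in
      sF S p e k i x *: (aCn A e k i 0 *: tens t n + aCn A e k i 1 *: tens m n
                        + aCn A e k i 2 *: tens n n)).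

Lemma Pelem_split e : Pelem X gv S A p e x =
  \sum_(j < 6) \sum_(i < dimE p) F1 e j i
  + \sum_(k < 4) \sum_(r < 3) \sum_(i < dimE p) F2 e k r i
  + \sum_(k < 4) \sum_(i < dimF p) F3 e k i
  + \sum_(j < 6) \sum_(i < dimE p.+1) (sE S p.+1 e j i x * aCE A e j i) *: 1%:M
  + \sum_(k < 4) \sum_(i < dimF p.+1) (sF S p.+1 e k i x * aCF A e k i) *: 1%:M
  + \sum_(i < dimC p.+1) (sC S p.+1 e i x * aCC A e i) *: 1%:M
  + \sum_(k < 4) \sum_(i < dimF p) F7 e k i
  + \sum_(i < dimC p) sC S p e i x *: aCT A e i.
Proof. reflexivity. Qed.


Lemma sum_edges (V : zmodType) (k : 'I_4) (G : 'I_6 -> V) :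
  (forall j, (forall r, face_edge k r != j) -> G j = 0) ->
  \sum_(j < 6) G j = \sum_(r < 3) G (face_edge k r).
Proof.
move=> h.
have Z : forall m, (m < 6)%N -> (forall r : 'I_3, fe_nat k r != m) -> G (inord m) = 0.
  move=> m hm hr; apply: h => r; rewrite face_edgeE; apply/eqP => /(congr1 val) /=.
  rewrite !inordK ?fe_nat_lt6 // => e; by move: (hr r); rewrite e eqxx.
rewrite gsum6 gsum3 !face_edgeE.
case: k h Z => [[|[|[|[|k]]]] Hk] h Z; try by exfalso.
- rewrite (Z 2%N) ?(Z 4%N) ?(Z 5%N) // ?addr0; try by case => [[|[|[|?]]] ?].
  rewrite !inordK //.
- rewrite (Z 1%N) ?(Z 3%N) ?(Z 5%N) // ?addr0; try by case => [[|[|[|?]]] ?].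
  rewrite !inordK // addrAC.
- rewrite (Z 0%N) ?(Z 3%N) ?(Z 4%N) // ?addr0 ?add0r; try by case => [[|[|[|?]]] ?].
  rewrite !inordK //.
- rewrite (Z 0%N) ?(Z 1%N) ?(Z 2%N) // ?addr0 ?add0r; try by case => [[|[|[|?]]] ?].
  rewrite !inordK //.
Qed.


Lemma Lset_elem e (k : 'I_4) : \det (Jm e) != 0 -> polytopal_q X gv S p e -> faceSet X gv e k x ->
  Lset (nvec e k) (Pelem X gv S A p e x) =
  \sum_(r < 3) \sum_(i < dimE p) Lset (nvec e k) (F1 e (face_edge k r) i)
  + \sum_(r < 3) \sum_(i < dimE p) Lset (nvec e k) (F2 e k r i)
  + \sum_(i < dimF p) Lset (nvec e k) (F3 e k i).
Proof.
move=> hdet [hE hF hC] hx.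
set n := nvec e k.
have E1 : Lset n (\sum_(j < 6) \sum_(i < dimE p) F1 e j i) =
          \sum_(r < 3) \sum_(i < dimE p) Lset n (F1 e (face_edge k r) i).
  rewrite Lset_sum (@sum_edges _ k (fun j => Lset n (\sum_(i < dimE p) F1 e j i))).
    by apply: eq_bigr => r _; rewrite Lset_sum.
  move=> j hj; rewrite big1 ?Lset0 // => i _.
  by rewrite /F1 (proj2 (hE j i (ltn_ord i)) k hj x hx) scale0r.
have E2 : Lset n (\sum_(k2 < 4) \sum_(r < 3) \sum_(i < dimE p) F2 e k2 r i) =
          \sum_(r < 3) \sum_(i < dimE p) Lset n (F2 e k r i).
  rewrite Lset_sum (bigD1 k) //= [X in _ + X]big1 ?addr0.
    by rewrite Lset_sum; apply: eq_bigr => r _; rewrite Lset_sum.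
  move=> k2 hk2; rewrite Lset_sum big1 // => r _; rewrite Lset_sum big1 // => i _.
  case: (boolP [exists r', face_edge k r' == face_edge k2 r]) => [/existsP [r' /eqP hr'] | hno].
    rewrite /F2 LsetZ !LsetD !LsetZ !Lset_tens /n (other_cross hdet hk2 (esym hr')).
    by rewrite /tens trmx0 !mulmx0 /symm trmx0 addr0 !scaler0 !addr0 scaler0.
  have hno' : forall r', face_edge k r' != face_edge k2 r.
    move=> r'; apply/negP => h; apply: (negP hno); apply/existsP; by exists r'.
  by rewrite /F2 (proj2 (hE _ i (ltn_ord i)) k hno' x hx) scale0r Lset0.
have E3 : Lset n (\sum_(k2 < 4) \sum_(i < dimF p) F3 e k2 i) =
          \sum_(i < dimF p) Lset n (F3 e k i).
  rewrite Lset_sum (bigD1 k) //= [X in _ + X]big1 ?addr0; first by rewrite Lset_sum.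
  move=> k2 hk2; rewrite Lset_sum big1 // => i _.
  have hk2' : k != k2 by rewrite eq_sym.
  by rewrite /F3 (hF k2 i (ltn_ord i) k hk2' x hx) scale0r Lset0.
have E4 : forall (J : finType) (I : J -> nat) (c : forall j, 'I_(I j) -> R),
    Lset n (\sum_(j : J) \sum_(i < I j) c j i *: 1%:M) = 0.
  move=> J I c; rewrite Lset_sum big1 // => j _; rewrite Lset_sum big1 // => i _.
  exact: Lset_scal.
have E6 : Lset n (\sum_(i < dimC p.+1) (sC S p.+1 e i x * aCC A e i) *: 1%:M) = 0.
  by rewrite Lset_sum big1 // => i _; exact: Lset_scal.
have E7 : Lset n (\sum_(k2 < 4) \sum_(i < dimF p) F7 e k2 i) = 0.
  rewrite Lset_sum big1 // => k2 _; rewrite Lset_sum big1 // => i _.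
  case: (eqVneq k2 k) => [-> | hk2].
    by rewrite /F7 LsetZ !LsetD !LsetZ !Lset_tens_n !scaler0 !addr0 scaler0.
  have hk2' : k != k2 by rewrite eq_sym.
  by rewrite /F7 (hF k2 i (ltn_ord i) k hk2' x hx) scale0r Lset0.
have E8 : Lset n (\sum_(i < dimC p) sC S p e i x *: aCT A e i) = 0.
  rewrite Lset_sum big1 // => i _.
  by rewrite (hC i (ltn_ord i) k x hx) scale0r Lset0.
rewrite Pelem_split !LsetD E1 E2 E3 E4 E4 E6 E7 E8 !addr0.
done.
Qed.

End PE.

Section Fin.
Variable R : realFieldType.
Local Notation vec := 'cV[R]_3.
Variables (N M : nat) (X : 'I_N -> vec) (gv : 'I_M -> 'I_4 -> 'I_N).
Variables (S : scalarFam R M) (A : coeffs R N M) (p : nat) (x : vec).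
Local Notation Jm := (Jm X gv).
Local Notation tvec := (tvec X gv).
Local Notation nvec := (nvec X gv).
Local Notation kvec := (kvec X gv).
Local Notation mvec := (mvec X gv).
Local Notation gedge := (gedge gv).
Local Notation gface := (gface gv).

Definition tg (G : 'I_N * 'I_N * 'I_N) (r : 'I_3) : vec := X (gedgeR G r).2 - X (gedgeR G r).1.

Lemma tvec_fe e k r : tvec e (face_edge k r) = tg (gface e k) r.
Proof. by rewrite tvec_g gedge_fe. Qed.

Lemma nvec_glob e k : \det (Jm e) != 0 -> nvec e k = cross (tg (gface e k) (inord 0)) (tg (gface e k) (inord 1)).
Proof. by move=> hdet; rewrite (nvec_cross hdet) !tvec_fe. Qed.

Lemma LF2 e (k : 'I_4) (r : 'I_3) i : \det (Jm e) != 0 ->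
  Lset (nvec e k) (@F2 _ _ _ X gv S A p x e k r i) =
  let G := gface e k in let n := nvec e k in
  let c := beta0 R r *: tg G (inord 1) - beta1 R r *: tg G (inord 0) in
  sE S p e (face_edge k r) i x *:
    (aEF A G (gedgeR G r) i 0 *: symm (tens (tg G r) c)
   + aEF A G (gedgeR G r) i 1 *: symm (tens (- cross n c) c)
   + aEF A G (gedgeR G r) i 2 *: symm (tens n c)).
Proof.
move=> hdet; rewrite /F2 LsetZ !LsetD !LsetZ !Lset_tens (kvec_cross hdet) (mvec_E hdet).
by rewrite !tvec_fe gedge_fe.
Qed.

Lemma F3E e (k : 'I_4) i : \det (Jm e) != 0 ->
  @F3 _ _ _ X gv S A p x e k i =
  let G := gface e k in let n := nvec e k in
  let c := beta0 R (inord 0 : 'I_3) *: tg G (inord 1) - beta1 R (inord 0 : 'I_3) *: tg G (inord 0) in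
  let t := tg G (inord 0) in let m := - cross n c in
      sF S p e k i x *: (aF A G i 0 *: tens t m
                        + aF A G i 1 *: tens m t
                        + aF A G i 2 *: (tens t t - tens m m)
                        + aF A G i 3 *: tens n t
                        + aF A G i 4 *: tens n m).
Proof.
by move=> hdet; rewrite /F3 /min_face_edge (mvec_E hdet) !tvec_fe.
Qed.

Lemma F1E e (j : 'I_6) k r i : j = face_edge k r ->
  @F1 _ _ _ X gv S A p x e j i =
     (let t := tg (gface e k) r in
      sE S p e j i x *: (aE A (gedgeR (gface e k) r) i 0 *: tens (dvec1 t) t
                        + aE A (gedgeR (gface e k) r) i 1 *: tens (dvec2 t) t)).
Proof. by move=> ->; rewrite /F1 tvec_fe gedge_fe. Qed.

Lemma faceSet_g e k : faceSet X gv e k =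
  hullS X (let: (a, b, c) := gface e k in [set a; b; c]).
Proof. by rewrite /faceSet /gface; case: (face_verts k) => [[a b] c]. Qed.

End Fin.

Unset Implicit Arguments.

Theorem mainTheorem4 (R : realFieldType) (N M : nat) (X : 'I_N -> 'cV[R]_3)
  (gv : 'I_M -> 'I_4 -> 'I_N) (p : nat) (S : scalarFam R M) (A : coeffs R N M) :
  (2 <= p)%N ->
  mesh_ok X gv ->
  scalar_ok X gv S p ->
  coeffs_ok A p ->
  forall (e e' : 'I_M) (k k' : 'I_4), e != e' -> gface gv e k = gface gv e' k' ->
  forall x, faceSet X gv e k x ->
    symm (Pelem X gv S A p e x *m (Anti (nvec X gv e k))^T)
    = symm (Pelem X gv S A p e' x *m (Anti (nvec X gv e k))^T).
Proof.
move=> _ [_ hdet _ _] [_ hS] _ e e' k k' _ hG x hx.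
have [hpq hsh] := hS p (introT orP (or_introl (eqxx p))).
have [_ hpolye] := hpq e. have [_ hpolye'] := hpq e'.
have hx' : faceSet X gv e' k' x by move: hx; rewrite !faceSet_g hG.
have Hn : nvec X gv e k = nvec X gv e' k' by rewrite !nvec_glob ?hdet // hG.
have [hsE hsF] := hsh e e' k k' hG x hx.
change (Lset (nvec X gv e k) (Pelem X gv S A p e x) =
        Lset (nvec X gv e k) (Pelem X gv S A p e' x)).
rewrite (Lset_elem A (hdet e) hpolye hx) [in RHS]Hn.
rewrite (Lset_elem A (hdet e') hpolye' hx').
have E1 : \sum_(r < 3) \sum_(i < dimE p) Lset (nvec X gv e k) (F1 X gv S A x e (face_edge k r) i)
  = \sum_(r < 3) \sum_(i < dimE p) Lset (nvec X gv e' k') (F1 X gv S A x e' (face_edge k' r) i).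
  apply: eq_bigr => r _; apply: eq_bigr => i _; rewrite Hn.
  rewrite (F1E X gv S A x e i (erefl (face_edge k r))) (F1E X gv S A x e' i (erefl (face_edge k' r))).
  by rewrite hG (hsE r i (ltn_ord i)).
have E2 : \sum_(r < 3) \sum_(i < dimE p) Lset (nvec X gv e k) (F2 X gv S A x e k r i)
  = \sum_(r < 3) \sum_(i < dimE p) Lset (nvec X gv e' k') (F2 X gv S A x e' k' r i).
  apply: eq_bigr => r _; apply: eq_bigr => i _.
  rewrite (LF2 S A x k r i (hdet e)) (LF2 S A x k' r i (hdet e')).
  by rewrite Hn hG (hsE r i (ltn_ord i)).
have E3 : \sum_(i < dimF p) Lset (nvec X gv e k) (F3 X gv S A x e k i)
  = \sum_(i < dimF p) Lset (nvec X gv e' k') (F3 X gv S A x e' k' i).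
  apply: eq_bigr => i _; rewrite Hn.
  rewrite (F3E S A x k i (hdet e)) (F3E S A x k' i (hdet e')).
  by rewrite Hn hG (hsF i (ltn_ord i)).
by rewrite E1 E2 E3.
Qed.
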